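(* For a paratopological group $H$ the following are equivalent: (a) $H$ is $\flat$-separated; (b) $H$ is a subgroup of a saturated paratopological group; (c) $H$ is a $\flat$-closed subgroup of a saturated paratopological group.
   Context: All topological spaces are Hausdorff. A paratopological group is a group with a Hausdorff topology making multiplication continuous. $G$ is saturated if $U^{-1}$ has nonempty interior for every nonempty open $U\subset G$. For a paratopological group $(G,\tau)$, $\tau^\flat$ is the strongest group topology on $G$ weaker than $\tau$ and $G^\flat=(G,\tau^\flat)$; $G$ is $\flat$-separated if $G^\flat$ is Hausdorff; a subset is $\flat$-closed if it is closed in $\tau^\flat$. ''Subgroup'' means subgroup with the induced topology (up to topological isomorphism). *)

(* Defs.v *)
From Stdlib Require Import Classical.

Set Implicit Arguments.

Definition subset {T : Type} (A B : T -> Prop) : Prop := forall x, A x -> B x.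

Definition is_topology {T : Type} (O : (T -> Prop) -> Prop) : Prop :=
  O (fun _ => True) /\
  (forall (F : (T -> Prop) -> Prop),
      (forall U, F U -> O U) -> O (fun x => exists U, F U /\ U x)) /\
  (forall U V, O U -> O V -> O (fun x => U x /\ V x)).

Definition hausdorff {T : Type} (O : (T -> Prop) -> Prop) : Prop :=
  forall x y, x <> y ->
    exists U V, O U /\ O V /\ U x /\ V y /\ (forall z, U z -> V z -> False).

Definition is_group {G : Type} (mul : G -> G -> G) (one : G) (inv : G -> G) : Prop :=
  (forall x y z, mul x (mul y z) = mul (mul x y) z) /\
  (forall x, mul one x = x) /\ (forall x, mul x one = x) /\
  (forall x, mul (inv x) x = one) /\ (forall x, mul x (inv x) = one).

Definition mul_continuous {G : Type} (mul : G -> G -> G) (O : (G -> Prop) -> Prop) : Prop :=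
  forall x y W, O W -> W (mul x y) ->
    exists U V, O U /\ O V /\ U x /\ V y /\ (forall u v, U u -> V v -> W (mul u v)).

Definition inv_continuous {G : Type} (inv : G -> G) (O : (G -> Prop) -> Prop) : Prop :=
  forall W, O W -> O (fun x => W (inv x)).

Record ParaTopGroup : Type := {
  carrier :> Type;
  gmul : carrier -> carrier -> carrier;
  gone : carrier;
  ginv : carrier -> carrier;
  gopen : (carrier -> Prop) -> Prop;
  group_ax : is_group gmul gone ginv;
  top_ax : is_topology gopen;
  haus_ax : hausdorff gopen;
  mul_cont_ax : mul_continuous gmul gopen
}.

Definition saturated (G : ParaTopGroup) : Prop :=
  forall U, gopen G U -> (exists x, U x) ->
    exists V, gopen G V /\ (exists y, V y) /\
      subset V (fun y => exists x, U x /\ y = ginv G x).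

Definition group_topology (G : ParaTopGroup) (s : (G -> Prop) -> Prop) : Prop :=
  is_topology s /\ mul_continuous (gmul G) s /\ inv_continuous (ginv G) s.

(* tau^flat: the strongest group topology weaker than tau, realised as the
   topology generated by all group topologies contained in tau (i.e. the
   smallest topology containing each of them). *)
Definition flat_open (G : ParaTopGroup) (U : G -> Prop) : Prop :=
  forall O : (G -> Prop) -> Prop, is_topology O ->
    (forall s, group_topology G s -> subset s (gopen G) -> subset s O) -> O U.

Definition flat_separated (G : ParaTopGroup) : Prop := hausdorff (flat_open G).

Definition flat_closed (G : ParaTopGroup) (A : G -> Prop) : Prop :=
  flat_open G (fun x => ~ A x).

Definition embedding (H G : ParaTopGroup) (f : H -> G) : Prop :=
  (forall x y, f (gmul H x y) = gmul G (f x) (f y)) /\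
  (forall x y, f x = f y -> x = y) /\
  (forall U, gopen H U <-> exists V, gopen G V /\ (forall x, U x <-> V (f x))).

(* Main.v *)
Require Import Defs.
From Stdlib Require Import Classical Reals Lra FunctionalExtensionality PropExtensionality.

Section GroupAlg.
Context {G : Type} {mul : G -> G -> G} {one : G} {inv : G -> G} (Hg : is_group mul one inv).
Lemma gA x y z : mul x (mul y z) = mul (mul x y) z.
Proof. destruct Hg as [h _]; apply h. Qed.
Lemma g1l x : mul one x = x.
Proof. destruct Hg as [_ [h _]]; apply h. Qed.
Lemma g1r x : mul x one = x.
Proof. destruct Hg as [_ [_ [h _]]]; apply h. Qed.
Lemma gVl x : mul (inv x) x = one.
Proof. destruct Hg as [_ [_ [_ [h _]]]]; apply h. Qed.
Lemma gVr x : mul x (inv x) = one.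
Proof. destruct Hg as [_ [_ [_ [_ h]]]]; apply h. Qed.
Lemma gK x y : mul (inv x) (mul x y) = y.
Proof. rewrite gA, gVl, g1l; reflexivity. Qed.
Lemma gKV x y : mul x (mul (inv x) y) = y.
Proof. rewrite gA, gVr, g1l; reflexivity. Qed.
Lemma gMK x y : mul (mul y x) (inv x) = y.
Proof. rewrite <- gA, gVr, g1r; reflexivity. Qed.
Lemma gMVK x y : mul (mul y (inv x)) x = y.
Proof. rewrite <- gA, gVl, g1r; reflexivity. Qed.
Lemma gcanl x y z : mul x y = mul x z -> y = z.
Proof. intro h. rewrite <- (gK x y), h, gK. reflexivity. Qed.
Lemma ginv_uniq x y : mul x y = one -> y = inv x.
Proof. intro h. apply (gcanl x). rewrite h, gVr. reflexivity. Qed.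
Lemma ginv_inv x : inv (inv x) = x.
Proof. symmetry. apply ginv_uniq. apply gVl. Qed.
Lemma ginv_one : inv one = one.
Proof. symmetry. apply ginv_uniq. apply g1l. Qed.
Lemma ginv_mul x y : inv (mul x y) = mul (inv y) (inv x).
Proof. symmetry. apply ginv_uniq. rewrite <- gA, (gA y), gVr, g1l, gVr. reflexivity. Qed.
End GroupAlg.

Section Topo.
Context {T : Type} {O : (T -> Prop) -> Prop} (HO : is_topology O).
Lemma open_local (S : T -> Prop) :
  (forall x, S x -> exists V, O V /\ V x /\ forall z, V z -> S z) -> O S.
Proof.
  intro h. destruct HO as [_ [Hu _]].
  assert (E : S = (fun x => exists U, (O U /\ forall z, U z -> S z) /\ U x)).
  { apply functional_extensionality; intro x; apply propositional_extensionality; split.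
    - intro hx. destruct (h x hx) as [V [? [? ?]]]. exists V; tauto.
    - intros [U [[_ hU] hx]]. auto. }
  rewrite E. apply Hu. tauto.
Qed.
Lemma open_True : O (fun _ => True).
Proof. destruct HO as [h _]; exact h. Qed.
Lemma open_and U V : O U -> O V -> O (fun x => U x /\ V x).
Proof. destruct HO as [_ [_ h]]; apply h. Qed.
Lemma open_union (F : (T -> Prop) -> Prop) : (forall U, F U -> O U) -> O (fun x => exists U, F U /\ U x).
Proof. destruct HO as [_ [h _]]; apply h. Qed.
Context {mul : T -> T -> T} (Hm : mul_continuous mul O).
Lemma transl_l g U : O U -> O (fun z => U (mul g z)).
Proof.
  intro hU. apply open_local. intros z hz.
  destruct (Hm g z U hU hz) as [A [B [_ [hB [hg [hz' hAB]]]]]].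
  exists B. split; [exact hB| split; [exact hz'|]].
  intros w hw. apply hAB; auto.
Qed.
Lemma transl_r g U : O U -> O (fun z => U (mul z g)).
Proof.
  intro hU. apply open_local. intros z hz.
  destruct (Hm z g U hU hz) as [A [B [hA [_ [hz' [hg hAB]]]]]].
  exists A. split; [exact hA| split; [exact hz'|]].
  intros w hw. apply hAB; auto.
Qed.
End Topo.
Section Frame.
Variables (G : Type) (mul : G -> G -> G) (one : G) (inv : G -> G).
Hypothesis Hg : is_group mul one inv.
Variables (I : Type) (good : I -> Prop) (N : I -> G -> Prop).
Hypothesis F1 : forall i, good i -> N i one.
Hypothesis F2 : forall i j, good i -> good j -> exists k, good k /\ forall z, N k z -> N i z /\ N j z.
Hypothesis F3 : forall i, good i -> exists j, good j /\ forall a b, N j a -> N j b -> N i (mul a b).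
Hypothesis F4 : forall i, good i -> forall g, exists j, good j /\ forall a, N j a -> N i (mul (mul g a) (inv g)).
Hypothesis F5 : exists i, good i.

Definition topo (S : G -> Prop) : Prop :=
  forall p, S p -> exists i, good i /\ forall n, N i n -> S (mul p n).
Definition Int (p : G) (i : I) (q : G) : Prop :=
  exists j, good j /\ forall n, N j n -> N i (mul (inv p) (mul q n)).

Lemma topo_top : is_topology topo.
Proof.
  split; [|split].
  - intros p _. destruct F5 as [i hi]. exists i; auto.
  - intros F hF p [U [hFU hU]]. destruct (hF U hFU p hU) as [i [hi h]].
    exists i; split; auto. intros n hn. exists U; auto.
  - intros U V hU hV p [hpU hpV]. destruct (hU p hpU) as [i [hi h1]].
    destruct (hV p hpV) as [j [hj h2]]. destruct (F2 i j hi hj) as [k [hk h]].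
    exists k; split; auto. intros n hn; destruct (h n hn); auto.
Qed.

Lemma Int_open p i : good i -> topo (Int p i).
Proof.
  intros hi q [j [hj h]]. destruct (F3 j hj) as [j' [hj' h3]].
  exists j'; split; auto. intros m hm. exists j'; split; auto.
  intros n hn. rewrite <- (gA Hg q m n). apply h. apply h3; auto.
Qed.
Lemma Int_self p i : good i -> Int p i p.
Proof. intro hi. exists i; split; auto. intros n hn. rewrite (gK Hg). exact hn. Qed.
Lemma Int_sub p i q : Int p i q -> N i (mul (inv p) q).
Proof. intros [j [hj h]]. rewrite <- (g1r Hg q). apply h. auto. Qed.

Lemma topo_mul : mul_continuous mul topo.
Proof.
  intros x y W hW hxy. destruct (hW _ hxy) as [i [hi hWi]].
  destruct (F3 i hi) as [i1 [hi1 h3]].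
  destruct (F4 i1 hi1 (inv y)) as [i2 [hi2 h4]].
  destruct (F2 i1 i2 hi1 hi2) as [i3 [hi3 h2]].
  exists (Int x i3), (Int y i1). split; [apply Int_open; auto|].
  split; [apply Int_open; auto|]. split; [apply Int_self; auto|].
  split; [apply Int_self; auto|].
  intros a b ha hb. apply Int_sub in ha. apply Int_sub in hb.
  destruct (h2 _ ha) as [_ ha2]. apply h4 in ha2.
  rewrite (ginv_inv Hg) in ha2.
  pose proof (h3 _ _ ha2 hb) as hc.
  assert (E : mul (mul (mul (inv y) (mul (inv x) a)) y) (mul (inv y) b)
              = mul (inv (mul x y)) (mul a b)).
  { rewrite <- (gA Hg _ y), (gKV Hg), (ginv_mul Hg).
    rewrite <- !(gA Hg). reflexivity. }
  rewrite E in hc. apply hWi in hc. rewrite (gKV Hg) in hc. exact hc.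
Qed.

Hypothesis F6 : forall i, good i -> exists j, good j /\ forall a, N j a -> N i (inv a).
Lemma topo_inv : inv_continuous inv topo.
Proof.
  intros W hW x hx. destruct (hW _ hx) as [i [hi h]].
  destruct (F4 i hi x) as [j [hj h4]]. destruct (F6 j hj) as [k [hk h6]].
  exists k; split; auto. intros n hn.
  pose proof (h _ (h4 _ (h6 _ hn))) as hc.
  rewrite (gA Hg), (gK Hg) in hc. rewrite (ginv_mul Hg). exact hc.
Qed.

Hypothesis HS : forall x y, x <> y -> exists i, good i /\ forall a b, N i a -> N i b -> mul x a <> mul y b.
Lemma topo_haus : hausdorff topo.
Proof.
  intros x y hxy. destruct (HS x y hxy) as [i [hi h]].
  exists (Int x i), (Int y i). split; [apply Int_open; auto|].
  split; [apply Int_open; auto|]. split; [apply Int_self; auto|].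
  split; [apply Int_self; auto|].
  intros z hx hy. apply Int_sub in hx. apply Int_sub in hy.
  apply (h _ _ hx hy). rewrite !(gKV Hg). reflexivity.
Qed.
End Frame.
Section Sat.
Variable G : ParaTopGroup.
Hypothesis Hsat : saturated G.
Notation mul := (gmul G).
Notation inv := (ginv G).
Notation e := (gone G).
Notation Hg := (group_ax G).
Notation HT := (top_ax G).

Definition sgood (U : G -> Prop) := gopen G U /\ U e.
Definition sN (U : G -> Prop) (z : G) := exists a b, U a /\ U b /\ z = mul a (inv b).

Lemma sF1 U : sgood U -> sN U e.
Proof. intros [_ h]. exists e, e. rewrite (gVr Hg). auto. Qed.
Lemma sF2 U V : sgood U -> sgood V -> exists k, sgood k /\ forall z, sN k z -> sN U z /\ sN V z.
Proof.
  intros [hU hU1] [hV hV1]. exists (fun x => U x /\ V x). split.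
  - split; [apply (open_and HT); auto|auto].
  - intros z [a [b [[ha1 ha2] [[hb1 hb2] ->]]]]. split; exists a, b; auto.
Qed.
Lemma sF5 : exists i, sgood i.
Proof. exists (fun _ => True). split; [apply (open_True HT); auto|auto]. Qed.
Lemma sF6 i : sgood i -> exists j, sgood j /\ forall a, sN j a -> sN i (inv a).
Proof.
  intros hi. exists i. split; auto. intros z [a [b [ha [hb ->]]]].
  exists b, a. split; auto. split; auto. rewrite (ginv_mul Hg), (ginv_inv Hg). reflexivity.
Qed.
Lemma sF4 i : sgood i -> forall g, exists j, sgood j /\ forall a, sN j a -> sN i (mul (mul g a) (inv g)).
Proof.
  intros [hU hU1] g. exists (fun z => i (mul (mul g z) (inv g))). split.
  - split.
    + apply (transl_l HT (mul_cont_ax G) g (fun w => i (mul w (inv g)))).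
      apply (transl_r HT (mul_cont_ax G)). exact hU.
    + rewrite (g1r Hg), (gVr Hg). exact hU1.
  - intros z [a [b [ha [hb ->]]]]. exists (mul (mul g a) (inv g)), (mul (mul g b) (inv g)).
    split; auto. split; auto.
    rewrite !(ginv_mul Hg), (ginv_inv Hg).
    rewrite <- !(gA Hg). f_equal. f_equal. rewrite (gK Hg). reflexivity.
Qed.
Lemma sF3 i : sgood i -> exists j, sgood j /\ forall a b, sN j a -> sN j b -> sN i (mul a b).
Proof.
  intros [hU hU1].
  assert (hee : i (mul e e)) by (rewrite (g1l Hg); exact hU1).
  destruct (mul_cont_ax G e e i hU hee) as [A [B [hA [hB [hAe [hBe hAB]]]]]].
  set (W0 := fun x => A x /\ B x).
  assert (hW0 : gopen G W0) by (apply (open_and HT); auto).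
  destruct (Hsat W0 hW0 (ex_intro _ e (conj hAe hBe))) as [V [hV [[y0 hy0] hVs]]].
  exists (fun z => V (mul y0 z) /\ W0 z). split.
  - split. + apply (open_and HT); auto. apply (transl_l HT (mul_cont_ax G)). exact hV.
    + rewrite (g1r Hg). split; auto. split; auto.
  - intros a b [a1 [a2 [[_ ha1] [[ha2 _] ->]]]] [b1 [b2 [[hb1 _] [[_ hb2] ->]]]].
    destruct (hVs _ ha2) as [x1 [hx1 E1]]. destruct (hVs _ hb1) as [x2 [hx2 E2]].
    exists (mul a1 x1), (mul b2 x2). split; [apply hAB; [apply ha1|apply hx1]|].
    split; [apply hAB; [apply hb2|apply hx2]|].
    assert (Ea2 : a2 = mul (inv y0) (inv x1)) by (rewrite <- E1, (gK Hg); reflexivity).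
    assert (Eb1 : b1 = mul (inv y0) (inv x2)) by (rewrite <- E2, (gK Hg); reflexivity).
    rewrite Ea2, Eb1. rewrite !(ginv_mul Hg), !(ginv_inv Hg).
    rewrite <- !(gA Hg). f_equal. f_equal. rewrite (gKV Hg). reflexivity.
Qed.
Lemma sHS : forall x y, x <> y -> exists i, sgood i /\ forall a b, sN i a -> sN i b -> mul x a <> mul y b.
Proof.
  intros x y hxy. destruct (@haus_ax G x y hxy) as [P [Q [hP [hQ [hPx [hQy hPQ]]]]]].
  set (U0 := fun z => P (mul x z) /\ Q (mul y z)).
  assert (g0 : sgood U0).
  { split. apply (open_and HT); apply (transl_l HT (mul_cont_ax G)); auto.
    unfold U0. rewrite !(g1r Hg). auto. }
  destruct (sF3 U0 g0) as [U1 [g1 h3]].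
  exists U1. split; auto. intros a b ha hb E.
  assert (hib : sN U1 (inv b)).
  { destruct hb as [b1 [b2 [? [? ->]]]]. exists b2, b1. split; auto. split; auto.
    rewrite (ginv_mul Hg), (ginv_inv Hg). reflexivity. }
  destruct (h3 _ _ ha hib) as [u [v [[hu1 _] [[_ hv2] Euv]]]].
  assert (E2 : mul x u = mul y v).
  { assert (E3 : mul x (mul a (inv b)) = y) by (rewrite (gA Hg), E, (gMK Hg); reflexivity).
    rewrite Euv in E3. rewrite <- E3. rewrite (gA Hg), (gMVK Hg). reflexivity. }
  apply (hPQ (mul x u)); auto. rewrite E2. auto.
Qed.

Definition ssig := @topo _ mul _ sgood sN.

Lemma ssig_gt : group_topology G ssig.
Proof.
  split; [|split].
  - apply topo_top; [exact sF2|exact sF5].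
  - apply (@topo_mul _ mul e inv); [exact Hg|exact sF1|exact sF2|exact sF3|exact sF4].
  - apply (@topo_inv _ mul e inv); [exact Hg|exact sF4|exact sF6].
Qed.
Lemma ssig_haus : hausdorff ssig.
Proof. apply (@topo_haus _ mul e inv); [exact Hg|exact sF1|exact sF3|exact sHS]. Qed.
Lemma ssig_sub : subset ssig (gopen G).
Proof.
  intros S hS. apply (open_local HT). intros p hp. destruct (hS p hp) as [U [[hU hU1] h]].
  exists (fun z => U (mul (inv p) z)). split; [apply (transl_l HT (mul_cont_ax G)); auto|].
  split; [rewrite (gVl Hg); auto|].
  intros z hz. rewrite <- (gKV Hg p z). apply h. exists (mul (inv p) z), e.
  rewrite (ginv_one Hg), (g1r Hg). auto.
Qed.
End Sat.
Lemma flat_of_gt (H : ParaTopGroup) (s : (H -> Prop) -> Prop) :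
  group_topology H s -> subset s (gopen H) -> forall U, s U -> flat_open H U.
Proof. intros hg hs U hU O _ h. exact (h s hg hs U hU). Qed.

Lemma flat_sep_of_gt (H : ParaTopGroup) (s : (H -> Prop) -> Prop) :
  group_topology H s -> subset s (gopen H) -> hausdorff s -> flat_separated H.
Proof.
  intros hg hs hh x y hxy. destruct (hh x y hxy) as [P [Q [hP [hQ rest]]]].
  exists P, Q. split; [apply (flat_of_gt _ _ hg hs); auto|].
  split; [apply (flat_of_gt _ _ hg hs); auto|]. exact rest.
Qed.

Lemma sub_sat_flat (H G : ParaTopGroup) (f : H -> G) :
  saturated G -> embedding H G f -> flat_separated H.
Proof.
  intros Hsat [Ef [Finj Ftop]].
  pose proof (group_ax G) as HgG. pose proof (group_ax H) as HgH.
  assert (F1 : f (gone H) = gone G).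
  { apply (gcanl HgG (f (gone H))). rewrite <- Ef, (g1l HgH), (g1r HgG). reflexivity. }
  assert (Fi : forall x, f (ginv H x) = ginv G (f x)).
  { intro x. apply (ginv_uniq HgG). rewrite <- Ef, (gVr HgH). exact F1. }
  pose proof (ssig_gt G Hsat) as [sT [sM sI]].
  set (s := fun S : H -> Prop => exists V, ssig G V /\ forall x, S x <-> V (f x)).
  apply (flat_sep_of_gt H s).
  - split; [split; [|split]|split].
    + exists (fun _ => True). split; [apply (open_True sT)|tauto].
    + intros F hF. exists (fun z => exists V, (ssig G V /\ exists S, F S /\ forall x, S x <-> V (f x)) /\ V z).
      split.
      * apply (open_union sT). intros V [hV _]. exact hV.
      * intro x. split.
        -- intros [S [hS hSx]]. destruct (hF S hS) as [V [hV hVS]].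
           exists V. split; [split; [exact hV| exists S; auto]|]. apply hVS; auto.
        -- intros [V [[hV [S [hS hVS]]] hVx]]. exists S. split; auto. apply hVS; auto.
    + intros U V [U' [hU' hUU]] [V' [hV' hVV]]. exists (fun z => U' z /\ V' z).
      split; [apply (open_and sT); auto|]. intro x. rewrite hUU, hVV. tauto.
    + intros x y W [W' [hW' hWW]] hxy. apply hWW in hxy. rewrite Ef in hxy.
      destruct (sM _ _ _ hW' hxy) as [A [B [hA [hB [hAx [hBy hAB]]]]]].
      exists (fun z => A (f z)), (fun z => B (f z)).
      split; [exists A; split; auto; tauto|].
      split; [exists B; split; auto; tauto|].
      split; auto. split; auto. intros u v hu hv. apply hWW. rewrite Ef. auto.
    + intros W [W' [hW' hWW]]. exists (fun z => W' (ginv G z)). split; [apply sI; auto|].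
      intro x. rewrite hWW, Fi. tauto.
  - intros S [V [hV hVS]]. apply Ftop. exists V. split; auto. apply (ssig_sub G); auto.
  - intros x y hxy. assert (hf : f x <> f y) by (intro E; apply hxy; apply Finj; auto).
    destruct (ssig_haus G Hsat _ _ hf) as [P [Q [hP [hQ [hPx [hQy hPQ]]]]]].
    exists (fun z => P (f z)), (fun z => Q (f z)).
    split; [exists P; split; auto; tauto|].
    split; [exists Q; split; auto; tauto|].
    split; auto. split; auto. intros z h1 h2. exact (hPQ _ h1 h2).
Qed.
Section FlatH.
Variable H : ParaTopGroup.
Notation mul := (gmul H).
Notation inv := (ginv H).
Notation e := (gone H).
Notation Hg := (group_ax H).
Notation HT := (top_ax H).

Inductive Wf : (H -> Prop) -> Prop :=
| wf_top : Wf (fun _ => True)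
| wf_base s V : group_topology H s -> subset s (gopen H) -> s V -> V e -> Wf V
| wf_int W1 W2 : Wf W1 -> Wf W2 -> Wf (fun x => W1 x /\ W2 x).

Lemma Wf_one W : Wf W -> W e.
Proof. induction 1; auto. Qed.
Lemma Wf_open W : Wf W -> gopen H W.
Proof. induction 1. apply (open_True HT). apply H1; auto. apply (open_and HT); auto. Qed.
Lemma Wf_sq W : Wf W -> exists W', Wf W' /\ forall a b, W' a -> W' b -> W (mul a b).
Proof.
  induction 1.
  - exists (fun _ => True). split; [constructor|auto].
  - pose proof H0 as [sT [sM sI]].
    assert (hee : V (mul e e)) by (rewrite (g1l Hg); auto).
    destruct (sM _ _ _ H2 hee) as [A [B [hA [hB [hAe [hBe hAB]]]]]].
    exists (fun x => A x /\ B x). split.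
    + apply (wf_base s); auto. apply (open_and sT); auto.
    + intros a b [? _] [_ ?]. auto.
  - destruct IHWf1 as [A [hA h1]]. destruct IHWf2 as [B [hB h2]].
    exists (fun x => A x /\ B x). split; [constructor; auto|].
    intros a b [? ?] [? ?]. auto.
Qed.
Lemma Wf_conj W : Wf W -> forall g, exists W', Wf W' /\ forall a, W' a -> W (mul (mul g a) (inv g)).
Proof.
  induction 1; intro g.
  - exists (fun _ => True). split; [constructor|auto].
  - pose proof H0 as [sT [sM sI]].
    exists (fun z => V (mul (mul g z) (inv g))). split; auto.
    apply (wf_base s); auto.
    + apply (transl_l sT sM g (fun w => V (mul w (inv g)))). apply (transl_r sT sM). auto.
    + rewrite (g1r Hg), (gVr Hg). auto.
  - destruct (IHWf1 g) as [A [hA h1]]. destruct (IHWf2 g) as [B [hB h2]].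
    exists (fun x => A x /\ B x). split; [constructor; auto|].
    intros a [? ?]. auto.
Qed.
Lemma Wf_inv W : Wf W -> exists W', Wf W' /\ forall a, W' a -> W (inv a).
Proof.
  induction 1.
  - exists (fun _ => True). split; [constructor|auto].
  - pose proof H0 as [sT [sM sI]].
    exists (fun z => V (inv z)). split; auto.
    apply (wf_base s); auto. rewrite (ginv_one Hg). auto.
  - destruct IHWf1 as [A [hA h1]]. destruct IHWf2 as [B [hB h2]].
    exists (fun x => A x /\ B x). split; [constructor; auto|].
    intros a [? ?]. auto.
Qed.

Definition Tf (P : H -> Prop) := forall a, P a -> exists W, Wf W /\ forall w, W w -> P (mul a w).

Lemma flat_char P : flat_open H P -> Tf P.
Proof.
  intro hP. apply hP.
  - split; [|split].
    + intros a _. exists (fun _ => True). split; [constructor|auto].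
    + intros F hF a [U [hU hUa]]. destruct (hF U hU a hUa) as [W [hW h]].
      exists W. split; auto. intros w hw. exists U; auto.
    + intros U V hU hV a [hUa hVa]. destruct (hU a hUa) as [A [hA h1]].
      destruct (hV a hVa) as [B [hB h2]]. exists (fun x => A x /\ B x).
      split; [constructor; auto|]. intros w [? ?]; auto.
  - intros s [sT [sM sI]] hsub V hV a hVa. exists (fun z => V (mul a z)). split.
    + apply (wf_base s); [split; [|split]; auto|auto| |].
      * apply (transl_l sT sM); auto.
      * rewrite (g1r Hg); auto.
    + auto.
Qed.
End FlatH.
Section Constr.
Variable H : ParaTopGroup.
Hypothesis Hfs : flat_separated H.
Notation mul := (gmul H).
Notation inv := (ginv H).
Notation e := (gone H).
Notation Hg := (group_ax H).
Notation HT := (top_ax H).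
Local Open Scope R_scope.

Definition Gc : Type := (carrier H * R)%type.
Definition mulG (p q : Gc) : Gc := (mul (fst p) (fst q), snd p + snd q).
Definition oneG : Gc := (e, 0).
Definition invG (p : Gc) : Gc := (inv (fst p), - snd p).

Lemma G_group : is_group mulG oneG invG.
Proof.
  unfold mulG, oneG, invG. split; [|split; [|split; [|split]]]; intros; simpl.
  - rewrite (gA Hg). f_equal. ring.
  - rewrite (g1l Hg). destruct x; simpl. f_equal. ring.
  - rewrite (g1r Hg). destruct x; simpl. f_equal. ring.
  - rewrite (gVl Hg). f_equal. ring.
  - rewrite (gVr Hg). f_equal. ring.
Qed.

Definition Ic : Type := ((H -> Prop) * (H -> Prop) * R)%type.
Definition cgood (i : Ic) : Prop :=
  let '(U, W, ep) := i in gopen H U /\ U e /\ Wf H W /\ 0 < ep.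
Definition cN (i : Ic) (z : Gc) : Prop :=
  let '(U, W, ep) := i in (snd z = 0 /\ U (fst z)) \/ ((0 < snd z < ep) /\ W (fst z)).

Lemma cF1 i : cgood i -> cN i oneG.
Proof. destruct i as [[U W] ep]. intros [_ [h _]]. left. simpl. auto. Qed.
Lemma cF2 i j : cgood i -> cgood j -> exists k, cgood k /\ forall z, cN k z -> cN i z /\ cN j z.
Proof.
  destruct i as [[U W] ep]; destruct j as [[U' W'] ep'].
  intros [hU [hU1 [hW hep]]] [hU' [hU1' [hW' hep']]].
  exists ((fun x => U x /\ U' x), (fun x => W x /\ W' x), Rmin ep ep'). simpl. split.
  - split; [apply (open_and HT); auto|]. split; auto. split; [constructor; auto|].
    apply Rmin_pos; auto.
  - intros z [[h1 [h2 h3]]|[h1 [h2 h3]]].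
    + split; left; auto.
    + pose proof (Rmin_l ep ep'). pose proof (Rmin_r ep ep').
      split; right; split; auto; lra.
Qed.
Lemma cF5 : exists i, cgood i.
Proof.
  exists ((fun _ : H => True), (fun _ : H => True), 1). simpl.
  split; [apply (open_True HT)|]. split; auto. split; [constructor|lra].
Qed.
Lemma cF3 i : cgood i -> exists j, cgood j /\ forall a b, cN j a -> cN j b -> cN i (mulG a b).
Proof.
  destruct i as [[U W] ep]. intros [hU [hU1 [hW hep]]].
  assert (hee : U (mul e e)) by (rewrite (g1l Hg); auto).
  destruct (mul_cont_ax H e e U hU hee) as [A [B [hA [hB [hAe [hBe hAB]]]]]].
  destruct (Wf_sq H _ hW) as [W1 [hW1 h1]].
  exists ((fun x => (A x /\ B x) /\ W1 x), W1, ep / 2). simpl. split.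
  - split; [apply (open_and HT); [apply (open_and HT); auto|apply (Wf_open H); auto]|].
    split; [split; [auto|apply (Wf_one H); auto]|]. split; auto. lra.
  - intros [ca ra] [cb rb]; unfold mulG; simpl.
    intros [[-> [[hA1 _] hW1a]]|[hra hW1a]] [[-> [[_ hB1] hW1b]]|[hrb hW1b]].
    + left. split; [lra|auto].
    + right. split; [lra|auto].
    + right. split; [lra|auto].
    + right. split; [lra|auto].
Qed.
Lemma cF4 i : cgood i -> forall g, exists j, cgood j /\ forall a, cN j a -> cN i (mulG (mulG g a) (invG g)).
Proof.
  destruct i as [[U W] ep]. intros [hU [hU1 [hW hep]]] [h t].
  destruct (Wf_conj H _ hW h) as [W1 [hW1 h1]].
  exists ((fun z => U (mul (mul h z) (inv h))), W1, ep). simpl. split.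
  - split.
    + apply (transl_l HT (mul_cont_ax H) h (fun w => U (mul w (inv h)))).
      apply (transl_r HT (mul_cont_ax H)). auto.
    + rewrite (g1r Hg), (gVr Hg). split; auto.
  - intros [c r]; unfold mulG, invG; simpl.
    replace (t + r + - t) with r by ring.
    intros [[-> hc]|[hr hc]]; [left|right]; auto.
Qed.
Lemma cHS : forall x y, x <> y -> exists i, cgood i /\ forall a b, cN i a -> cN i b -> mulG x a <> mulG y b.
Proof.
  intros [a t] [b s] hxy.
  destruct (Req_dec t s) as [hts|hts].
  - subst s. assert (hab : a <> b) by (intro E; apply hxy; subst; auto).
    destruct (Hfs a b hab) as [P [Q [hP [hQ [hPa [hQb hPQ]]]]]].
    destruct (flat_char H _ hP _ hPa) as [Wp [hWp h1]].
    destruct (flat_char H _ hQ _ hQb) as [Wq [hWq h2]].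
    set (W0 := fun x => Wp x /\ Wq x).
    assert (hW0 : Wf H W0) by (constructor; auto).
    exists (W0, W0, 1). simpl. split.
    + split; [apply (Wf_open H); auto|]. split; [apply (Wf_one H); auto|]. split; auto. lra.
    + intros [c r] [c' r']; unfold mulG; simpl. intros hc hc' E.
      assert (E1 : mul a c = mul b c') by (injection E; auto).
      assert (w1 : W0 c) by (destruct hc as [[_ ?]|[_ ?]]; auto).
      assert (w2 : W0 c') by (destruct hc' as [[_ ?]|[_ ?]]; auto).
      apply (hPQ (mul a c)). apply h1, w1. rewrite E1. apply h2, w2.
  - exists ((fun _ : H => True), (fun _ : H => True), Rabs (t - s)). simpl. split.
    + split; [apply (open_True HT)|]. split; auto. split; [constructor|].
      apply Rabs_pos_lt. lra.
    + intros [c r] [c' r']; unfold mulG; simpl. intros hc hc' E.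
      assert (E1 : t + r = s + r') by (injection E; auto).
      assert (hr : 0 <= r < Rabs (t - s)) by (destruct hc as [[-> _]|[? _]]; [split; [lra|apply Rabs_pos_lt; lra]|lra]).
      assert (hr' : 0 <= r' < Rabs (t - s)) by (destruct hc' as [[-> _]|[? _]]; [split; [lra|apply Rabs_pos_lt; lra]|lra]).
      revert hr hr'. unfold Rabs. destruct (Rcase_abs (t - s)); intros; lra.
Qed.
Definition Gtop := @topo Gc mulG Ic cgood cN.
Lemma Gtop_top : is_topology Gtop.
Proof. apply topo_top; [exact cF2|exact cF5]. Qed.
Lemma Gtop_mul : mul_continuous mulG Gtop.
Proof. apply (@topo_mul _ mulG oneG invG); [exact G_group|exact cF1|exact cF2|exact cF3|exact cF4]. Qed.
Lemma Gtop_haus : hausdorff Gtop.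
Proof. apply (@topo_haus _ mulG oneG invG); [exact G_group|exact cF1|exact cF3|exact cHS]. Qed.

Definition Gpt : ParaTopGroup :=
  {| carrier := Gc; gmul := mulG; gone := oneG; ginv := invG; gopen := Gtop;
     group_ax := G_group; top_ax := Gtop_top; haus_ax := Gtop_haus; mul_cont_ax := Gtop_mul |}.

Lemma Gpt_sat : saturated Gpt.
Proof.
  unfold saturated; simpl. intros U hU [p hp].
  destruct (hU p hp) as [[[U0 W0] ep] [[hU0 [hU01 [hW0 hep]]] h]].
  destruct (Wf_inv H _ hW0) as [W1 [hW1 hi]].
  set (j := (W1, W1, ep / 2) : Ic).
  assert (hj : cgood j).
  { simpl. split; [apply (Wf_open H); auto|]. split; [apply (Wf_one H); auto|]. split; auto. lra. }
  set (m0 := (e, - (ep / 2)) : Gc).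
  exists (fun z => Int Gc mulG invG Ic cgood cN m0 j (mulG z p)). split; [|split].
  - apply (transl_r Gtop_top Gtop_mul p (Int Gc mulG invG Ic cgood cN m0 j)).
    apply (Int_open Gc mulG oneG invG G_group Ic cgood cN cF3 m0 j hj).
  - exists (mulG m0 (invG p)). rewrite (gMVK G_group).
    apply (Int_self Gc mulG oneG invG G_group Ic cgood cN m0 j hj).
  - intros z hz. apply (Int_sub Gc mulG oneG invG G_group Ic cgood cN cF1) in hz.
    exists (mulG p (invG (mulG z p))). split.
    + apply h. revert hz. generalize (mulG z p). intros [c r]. unfold m0, invG, mulG; simpl.
      rewrite (ginv_one Hg), (g1l Hg).
      intros [[hr hc]|[hr hc]]; right; split; try lra; apply hi; auto.
    + rewrite (ginv_mul G_group), (ginv_inv G_group), (gMK G_group). reflexivity.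
Qed.

Definition femb (x : H) : Gpt := (x, 0).

Lemma femb_emb : embedding H Gpt femb.
Proof.
  split; [|split].
  - intros x y. unfold femb; simpl; unfold mulG; simpl. f_equal. ring.
  - intros x y E. unfold femb in E. injection E; auto.
  - intro U. split.
    + intro hU. exists (fun p : Gc => (snd p = 0 /\ U (fst p)) \/ 0 < snd p). split.
      * simpl. intros [a t] hp. simpl in hp. destruct hp as [[ht ha]|ht].
        -- exists ((fun z => U (mul a z)), (fun _ : H => True), 1). split.
           ++ simpl. split; [apply (transl_l HT (mul_cont_ax H)); auto|].
              rewrite (g1r Hg). split; auto. split; [constructor|lra].
           ++ intros [c r]; unfold mulG; simpl. intros [[hr hc]|[hr _]].
              ** left. split; [lra|auto].
              ** right. lra.
        -- exists ((fun _ : H => True), (fun _ : H => True), 1). split.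
           ++ simpl. split; [apply (open_True HT)|]. split; auto. split; [constructor|lra].
           ++ intros [c r]; unfold mulG; simpl. intros [[hr _]|[hr _]]; right; lra.
      * intro x; unfold femb; simpl. split; [auto|]. intros [[_ ?]|?]; [auto|lra].
    + intros [V [hV hVU]]. apply (open_local HT). intros x hx.
      apply hVU in hx. destruct (hV _ hx) as [[[U0 W] ep] [[hU0 [hU01 _]] h]].
      exists (fun z => U0 (mul (inv x) z)). split; [apply (transl_l HT (mul_cont_ax H)); auto|].
      split; [rewrite (gVl Hg); auto|].
      intros z hz. apply hVU.
      assert (hn : cN (U0, W, ep) (mul (inv x) z, 0)) by (left; simpl; auto).
      pose proof (h _ hn) as hc. unfold femb, mulG in hc |- *; simpl in hc.
      rewrite (gKV Hg) in hc. replace (0 + 0) with 0 in hc by ring. exact hc.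
Qed.

Definition sR (S : Gc -> Prop) : Prop :=
  (forall p q, snd p = snd q -> S p -> S q) /\
  (forall p, S p -> exists d, 0 < d /\ forall q, Rabs (snd q - snd p) < d -> S q).

Lemma sR_gt : group_topology Gpt sR.
Proof.
  split; [split; [|split]|split].
  - split; [auto|]. intros p _. exists 1. split; [lra|auto].
  - intros F hF. split.
    + intros p q hpq [U [hU hUp]]. exists U. split; auto. apply (proj1 (hF U hU) p); auto.
    + intros p [U [hU hUp]]. destruct (proj2 (hF U hU) p hUp) as [d [hd h]].
      exists d. split; auto. intros q hq. exists U; auto.
  - intros U V [hU1 hU2] [hV1 hV2]. split.
    + intros p q hpq [? ?]. split; [apply (hU1 p)|apply (hV1 p)]; auto.
    + intros p [hUp hVp]. destruct (hU2 p hUp) as [d1 [hd1 h1]]. destruct (hV2 p hVp) as [d2 [hd2 h2]].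
      exists (Rmin d1 d2). split; [apply Rmin_pos; auto|].
      intros q hq. pose proof (Rmin_l d1 d2). pose proof (Rmin_r d1 d2). split; [apply h1|apply h2]; lra.
  - intros x y W [hW1 hW2] hxy. destruct (hW2 _ hxy) as [d [hd h]].
    exists (fun q : Gc => Rabs (snd q - snd x) < d / 2), (fun q : Gc => Rabs (snd q - snd y) < d / 2).
    split; [|split; [|split; [|split]]].
    + split. * intros p q hpq. rewrite hpq. auto.
      * intros p hp. exists (d / 2 - Rabs (snd p - snd x)). split; [lra|].
        intros q hq. revert hp hq. unfold Rabs. repeat destruct Rcase_abs; intros; lra.
    + split. * intros p q hpq. rewrite hpq. auto.
      * intros p hp. exists (d / 2 - Rabs (snd p - snd y)). split; [lra|].
        intros q hq. revert hp hq. unfold Rabs. repeat destruct Rcase_abs; intros; lra.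
    + simpl. replace (snd x - snd x) with 0 by ring. rewrite Rabs_R0. lra.
    + simpl. replace (snd y - snd y) with 0 by ring. rewrite Rabs_R0. lra.
    + intros u v hu hv. apply h. simpl. unfold mulG; simpl. revert hu hv. unfold Rabs. repeat destruct Rcase_abs; intros; lra.
  - intros W [hW1 hW2]. split.
    + intros p q hpq. apply hW1. simpl. unfold invG; simpl. rewrite hpq. reflexivity.
    + intros p hp. destruct (hW2 _ hp) as [d [hd h]]. exists d. split; auto.
      intros q hq. apply h. simpl; unfold invG; simpl. revert hq. unfold Rabs. repeat destruct Rcase_abs; intros; lra.
Qed.

Lemma sR_sub : subset sR (gopen Gpt).
Proof.
  intros S [_ hS] p hp. destruct (hS p hp) as [d [hd h]].
  exists ((fun _ : H => True), (fun _ : H => True), d). split.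
  - simpl. split; [apply (open_True HT)|]. split; auto. split; [constructor|lra].
  - intros [c r] hn. apply h. unfold mulG; simpl.
    destruct hn as [[hr _]|[hr _]]; simpl in hr; unfold Rabs; destruct Rcase_abs; lra.
Qed.

Lemma Gpt_closed : flat_closed Gpt (fun y => exists x, y = femb x).
Proof.
  unfold flat_closed. apply (flat_of_gt _ _ sR_gt sR_sub). split.
  - intros p q hpq hp [x ->]. apply hp. exists (fst p). destruct p as [a t]. simpl in hpq.
    unfold femb. rewrite hpq. reflexivity.
  - intros p hp. assert (hs : snd p <> 0).
    { intro E. apply hp. exists (fst p). destruct p; simpl in *. unfold femb. rewrite E; auto. }
    exists (Rabs (snd p)). split; [apply Rabs_pos_lt; auto|].
    intros q hq [x ->]. simpl in hq. revert hq hs. unfold Rabs. repeat destruct Rcase_abs; intros; lra.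
Qed.
End Constr.

Theorem corollary3 (H : ParaTopGroup) :
  (flat_separated H <->
     exists (G : ParaTopGroup) (f : H -> G), saturated G /\ embedding H G f) /\
  ((exists (G : ParaTopGroup) (f : H -> G), saturated G /\ embedding H G f) <->
     exists (G : ParaTopGroup) (f : H -> G),
       saturated G /\ embedding H G f /\ flat_closed G (fun y => exists x, y = f x)).
Proof.
  split; split.
  - intro hf. exists (Gpt H hf), (femb H hf). split; [apply Gpt_sat|apply femb_emb].
  - intros [G [f [hs he]]]. exact (sub_sat_flat H G f hs he).
  - intros [G [f [hs he]]]. pose proof (sub_sat_flat H G f hs he) as hf.
    exists (Gpt H hf), (femb H hf). split; [apply Gpt_sat|]. split; [apply femb_emb|apply Gpt_closed].
  - intros [G [f [hs [he _]]]]. exists G, f. auto.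
Qed.
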